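(* Let $\mathbbm{k}$ be an algebraically closed field of characteristic $0$, and let $\mathscr{A}_1$ be the connected cochain DG algebra whose underlying graded algebra is the free algebra $\mathscr{A}_1^{\#}=\mathbbm{k}\langle x_1,x_2,x_3\rangle$ with $|x_1|=|x_2|=|x_3|=1$, and whose differential is determined by $\partial(x_1)=x_3^2$, $\partial(x_2)=x_2^2$, $\partial(x_3)=0$ (extended by the graded Leibniz rule). Then the cohomology ring of $\mathscr{A}_1$ is $$H(\mathscr{A}_1)=\frac{\mathbbm{k}[\lceil x_3 \rceil, \lceil x_1x_3+x_3x_1 \rceil]}{( \lceil x_3\rceil^2 )},$$ i.e. it is the commutative algebra generated by the classes $\lceil x_3\rceil$ (degree $1$) and $\lceil x_1x_3+x_3x_1\rceil$ (degree $2$) subject only to $\lceil x_3\rceil^2=0$.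
   Context: A cochain DG algebra is a $\mathbb{Z}$-graded algebra $\mathscr{A}$ with a degree $1$ differential $\partial$ satisfying $\partial^2=0$ and $\partial(ab)=\partial(a)b+(-1)^{|a|}a\partial(b)$ for homogeneous $a,b$. For a cocycle $z$, $\lceil z\rceil$ denotes its cohomology class in $H(\mathscr{A})$. *)

(* Defs.v *)
From HB Require Import structures.
From mathcomp Require Import all_boot all_order all_algebra.
Set Implicit Arguments. Unset Strict Implicit. Unset Printing Implicit Defensive.
Import GRing.Theory.
Local Open Scope ring_scope.

(* The free graded algebra K<x1,x2,x3>, |xi| = 1.  Its degree-n component has
   the words of length n over {x1,x2,x3} as a basis; a homogeneous element of
   degree n is its coefficient function on words.  Letters are 'I_3:
   index 0 = x1, index 1 = x2, index 2 = x3. *)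

Definition word (n : nat) := n.-tuple 'I_3.

Section FreeDGA.
Variable K : fieldType.

Local Notation cochain n := {ffun word n -> K^o}.

Definition dga_mul m n (a : cochain m) (b : cochain n) : cochain (m + n) :=
  [ffun w : word (m + n) =>
     \sum_(u : word m) \sum_(v : word n)
        a u * b v * ((val w == val u ++ val v)%B)%:R].

Definition dga_one : cochain 0 := [ffun _ => 1].

Definition dga_gen (i : 'I_3) : cochain 1 := [ffun w : word 1 => ((val w == [:: i])%B)%:R].

Definition L1 : 'I_3 := @Ordinal 3 0 isT.
Definition L2 : 'I_3 := @Ordinal 3 1 isT.
Definition L3 : 'I_3 := @Ordinal 3 2 isT.

Definition x1 := dga_gen L1.
Definition x2 := dga_gen L2.
Definition x3 := dga_gen L3.

Definition dgen (i : 'I_3) : cochain 2 :=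
  if i == L1 then dga_mul x3 x3 else if i == L2 then dga_mul x2 x2 else 0.

(* the differential A^n -> A^(n+1), i.e. the graded Leibniz extension:
   d(u_0 ... u_{n-1}) = sum_j (-1)^j u_0..u_{j-1} d(u_j) u_{j+1}..u_{n-1},
   (each letter has degree 1), extended linearly. *)
Definition dga_d n (a : cochain n) : cochain n.+1 :=
  [ffun v : word n.+1 =>
     \sum_(u : word n) \sum_(j < n) \sum_(s : word 2)
        (-1) ^+ j * a u * dgen (tnth u j) s *
        ((val v == take j (val u) ++ val s ++ drop j.+1 (val u))%B)%:R].

Definition is_coboundary (n : nat) : cochain n -> Prop :=
  match n return cochain n -> Prop with
  | 0 => fun c => c = 0
  | n'.+1 => fun c => exists b : cochain n', dga_d b = c
  end.

Definition zz : cochain 2 := dga_mul x1 x3 + dga_mul x3 x1.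

Fixpoint zpow (k : nat) : cochain k.*2 :=
  match k return cochain k.*2 with
  | 0 => dga_one
  | k'.+1 => dga_mul zz (zpow k')
  end.

End FreeDGA.

Notation cochain K n := {ffun word n -> K^o}.

(* Main.v *)
Require Import Defs.
From HB Require Import structures.
From mathcomp Require Import all_boot all_order all_algebra.
From mathcomp Require Import ring zify.
Import GRing.Theory.
Local Open Scope ring_scope.
Set Implicit Arguments. Unset Strict Implicit.

Section Work.
Variable K : fieldType.
Local Notation F := (seq 'I_3 -> K).

Definition ev n (a : cochain K n) : F :=
  fun s => match insub s with Some t => (a t : K) | None => 0 end.

Lemma evE n (a : cochain K n) (t : word n) : ev a (val t) = a t.
Proof. by rewrite /ev valK. Qed.

Lemma ev_out n (a : cochain K n) s : size s != n -> ev a s = 0.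
Proof. by move=> h; rewrite /ev insubN. Qed.

Lemma ev_inj n (a b : cochain K n) : ev a =1 ev b -> a = b.
Proof. move=> h; apply/ffunP => t; by rewrite -!evE h. Qed.

Lemma sum_word_delta m (G : F) (s0 : seq 'I_3) :
  \sum_(t : word m) G (val t) * ((val t == s0)%B)%:R = if size s0 == m then G s0 else 0.
Proof.
case: ifP => hs.
- rewrite (bigD1 (Tuple hs)) //= eqxx mulr1 big1 ?addr0 // => t ht.
  have -> : (val t == s0) = false.
    apply/negbTE; apply: contra ht => /eqP e; apply/eqP; apply: val_inj; exact e.
  by rewrite mulr0.
- rewrite big1 // => t _; have -> : (val t == s0) = false.
    apply/negbTE/eqP => e; move: hs; by rewrite -e size_tuple eqxx.
  by rewrite mulr0.
Qed.

Lemma cat_eq_split (w u v : seq 'I_3) m : size u = m ->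
  (w == u ++ v) = (u == take m w) && (v == drop m w).
Proof.
move=> hu; apply/eqP/andP => [->|[/eqP -> /eqP ->]].
- by rewrite take_size_cat // drop_size_cat.
- by rewrite cat_take_drop.
Qed.

Lemma evM m n (a : cochain K m) (b : cochain K n) w :
  ev (dga_mul a b) w = ev a (take m w) * ev b (drop m w).
Proof.
case: (boolP (size w == (m + n)%N)) => hw.
- rewrite -[w]/(val (Tuple hw)) evE /dga_mul ffunE /=.
  have e1 : forall (u : word m) (v : word n),
     (a u * b v * ((w == val u ++ val v)%B)%:R : K) =
     (ev a (val u) * ((val u == take m w)%B)%:R) *
     (ev b (val v) * ((val v == drop m w)%B)%:R).
    move=> u v; rewrite (cat_eq_split _ _ (size_tuple u)) -mulnb natrM !evE.
    by rewrite mulrACA.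
  under eq_bigr => u _ do under eq_bigr => v _ do rewrite e1.
  under eq_bigr => u _ do rewrite -mulr_sumr (sum_word_delta n (ev b)).
  rewrite -mulr_suml (sum_word_delta m (ev a)).
  rewrite size_take size_drop (eqP hw) addKn eqxx.
  have -> : (if (m < m + n)%N then m else m + n) = m.
    by case: (ltnP m (m+n)) => // h; apply/eqP; rewrite eqn_leq h leq_addr.
  by rewrite eqxx.
- rewrite (ev_out (dga_mul a b)) //.
  case: (ltnP (size w) m) => h.
  + rewrite (ev_out a) ?mul0r // size_take ltnNge (ltnW h) /= (ltn_eqF h) //.
  + rewrite (ev_out b) ?mulr0 // size_drop; apply: contra hw => /eqP <-.
    by rewrite subnKC.
Qed.

Lemma I3_cases (l : 'I_3) : l = L1 \/ l = L2 \/ l = L3.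
Proof.
case: l => [[|[|[|//]]] p]; [left|right;left|right;right]; by apply: val_inj.
Qed.

Lemma evgen i s : ev (dga_gen K i) s = ((s == [:: i])%B)%:R.
Proof.
case: (boolP (size s == 1%N)) => hs.
- by rewrite -[s]/(val (Tuple hs)) evE ffunE.
- rewrite ev_out //; case: eqP => // e; by move: hs; rewrite e.
Qed.

Lemma ev_sq i s : ev (dga_mul (dga_gen K i) (dga_gen K i)) s = ((s == [:: i; i])%B)%:R.
Proof.
rewrite evM !evgen; case: s => [|l s] /=; first by rewrite mul0r.
by rewrite drop0 !eqseq_cons take0 eqxx andbT -natrM mulnb.
Qed.

Lemma dgenE l s : ev (dgen K l) s =
  ((l == L1)%B)%:R * ((s == [:: L3; L3])%B)%:R + ((l == L2)%B)%:R * ((s == [:: L2; L2])%B)%:R.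
Proof.
rewrite /dgen; have [->|[->|->]] := I3_cases l => /=.
- by rewrite /x3 ev_sq mul1r mul0r addr0.
- by rewrite /x2 ev_sq mul1r mul0r add0r.
- rewrite !mul0r addr0 /ev; case: insub => //= t; by rewrite ffunE.
Qed.

Definition hd (f : F) (l1 l2 : 'I_3) (w : seq 'I_3) : K :=
  ((l1 == L3) && (l2 == L3))%:R * f (L1 :: w) + ((l1 == L2) && (l2 == L2))%:R * f (L2 :: w).
Definition T (f : F) (w : seq 'I_3) : K :=
  match w with l1 :: l2 :: w' => hd f l1 l2 w' | _ => 0 end.
Definition shl (l : 'I_3) (f : F) : F := fun u => f (l :: u).
Fixpoint Dw (w : seq 'I_3) (f : F) {struct w} : K :=
  match w with
  | l1 :: t => match t with l2 :: w' => hd f l1 l2 w' - Dw t (shl l1 f) | [::] => 0 end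
  | [::] => 0 end.

Lemma Dw_cons2 l1 l2 w f : Dw (l1 :: l2 :: w) f = hd f l1 l2 w - Dw (l2 :: w) (shl l1 f).
Proof. by []. Qed.

Lemma DwE w f : Dw w f = \sum_(j < size w) (-1)^+j * T (fun u => f (take j w ++ u)) (drop j w).
Proof.
elim: w f => [|l1 t IH] f; first by rewrite big_ord0.
case: t IH => [|l2 w'] IH; first by rewrite big_ord1 /= mulr0.
rewrite Dw_cons2 IH [RHS]big_ord_recl expr0 mul1r; congr (_ + _).
rewrite -sumrN; apply: eq_bigr => j _.
by rewrite lift0 exprS mulN1r mulNr.
Qed.

Lemma key_bool n (u v : seq 'I_3) j (l : 'I_3) (S : seq 'I_3) :
  size u = n -> size v = n.+1 -> (j < n)%N -> size S = 2%N ->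
  ((nth L1 u j == l) && (v == take j u ++ S ++ drop j.+1 u)) =
  ((take 2 (drop j v) == S) && (u == take j v ++ l :: drop j.+2 v)).
Proof.
move=> hu hv hj hS; apply/andP/andP => [[/eqP hl /eqP ->]|[/eqP hS' /eqP ->]].
- have htk : size (take j u) = j by rewrite size_take hu hj.
  split.
  + by rewrite drop_size_cat // take_size_cat.
  + rewrite take_size_cat // catA drop_size_cat ?size_cat ?htk ?hS ?addn2 //.
    by rewrite -hl -drop_nth ?hu // cat_take_drop.
- have htk : size (take j v) = j by rewrite size_take hv ltnS (ltnW hj).
  split.
  + by rewrite nth_cat htk ltnn subnn.
  + have hd1 : drop j.+1 (take j v ++ l :: drop j.+2 v) = drop j.+2 v.
      by rewrite -(add1n j) -drop_drop drop_size_cat //= drop0.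
    rewrite take_size_cat // hd1.
    apply/eqP; rewrite -hS'.
    by rewrite -(add2n j) -drop_drop !cat_take_drop.
Qed.


Lemma inner_sum (c : K) (l : 'I_3) (P : seq 'I_3 -> K) :
  \sum_(s : word 2) c * ev (dgen K l) (val s) * P (val s) =
  c * ((l == L1)%:R * P [:: L3; L3] + (l == L2)%:R * P [:: L2; L2]).
Proof.
rewrite (eq_bigr (fun s : word 2 =>
   (fun x => c * (l == L1)%:R * P x) (val s) * ((val s == [:: L3; L3])%B)%:R +
   (fun x => c * (l == L2)%:R * P x) (val s) * ((val s == [:: L2; L2])%B)%:R)); last first.
  by move=> s _; rewrite dgenE /=; ring.
rewrite big_split (sum_word_delta 2 (fun x => c * (l == L1)%:R * P x)) (sum_word_delta 2 (fun x => c * (l == L2)%:R * P x)) /=; ring.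
Qed.

Lemma outer_sum n (j : 'I_n) (G : F) v : size v = n.+1 ->
  \sum_(u : word n) (-1)^+j * G (val u) *
     ((tnth u j == L1)%:R * ((v == take j u ++ [:: L3; L3] ++ drop j.+1 u)%B)%:R +
      (tnth u j == L2)%:R * ((v == take j u ++ [:: L2; L2] ++ drop j.+1 u)%B)%:R)
  = (-1)^+j * T (fun w => G (take j v ++ w)) (drop j v).
Proof.
move=> hv.
have hj := ltn_ord j.
under eq_bigr => u _ do rewrite (tnth_nth L1) -!natrM !mulnb
   !(key_bool _ (size_tuple u) hv hj) // -!mulnb !natrM.
set s1 := take j v ++ L1 :: drop j.+2 v.
set s2 := take j v ++ L2 :: drop j.+2 v.
rewrite (eq_bigr (fun u : word n =>
   (fun x => (-1)^+j * G x * ((take 2 (drop j v) == [:: L3; L3])%B)%:R) (val u) * ((val u == s1)%B)%:R +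
   (fun x => (-1)^+j * G x * ((take 2 (drop j v) == [:: L2; L2])%B)%:R) (val u) * ((val u == s2)%B)%:R)); last first.
  by move=> u _ /=; ring.
rewrite big_split (sum_word_delta n (fun x => (-1)^+j * G x * ((take 2 (drop j v) == [:: L3; L3])%B)%:R)) (sum_word_delta n (fun x => (-1)^+j * G x * ((take 2 (drop j v) == [:: L2; L2])%B)%:R)) /=.
have hsz : forall l, size (take j v ++ l :: drop j.+2 v) = n.
  move=> l; rewrite size_cat /= size_drop size_take hv ltnS (ltnW hj).
  lia.
rewrite /s1 /s2 !hsz eqxx.
have hd2 : drop j v = nth L1 v j :: nth L1 v j.+1 :: drop j.+2 v.
  by rewrite (drop_nth L1) ?hv ?ltnS ?(ltnW hj) // (drop_nth L1) // hv ltnS.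
rewrite hd2 /= /hd !eqseq_cons take0 eqxx !andbT; ring.
Qed.

Definition supp (f : F) (m : nat) := forall s, size s != m -> f s = 0.

Lemma Dw_supp w f (m : nat) : supp f m -> size w != m.+1 -> Dw w f = 0.
Proof.
elim: w f m => [|l1 t IH] f m hf hw //.
case: t IH hw => [|l2 w'] IH hw //.
have h1 : forall l, size (l :: w') != m.
  by move=> l; apply: contra hw => /eqP /= <-.
rewrite Dw_cons2 /hd !hf // !mulr0 addr0 sub0r; destruct m as [|m].
- rewrite (IH _ (size (l2 :: w'))) ?oppr0 //; first by move=> s _; rewrite /shl hf.
  by rewrite eqn_leq ltnn andbF.
- rewrite (IH _ m) ?oppr0 //.
  by move=> s hs; rewrite /shl hf.
Qed.

Lemma evD n (a : cochain K n) v : ev (dga_d a) v = Dw v (ev a).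
Proof.
case: (boolP (size v == n.+1)) => hv.
- transitivity (dga_d a (Tuple hv)); first by rewrite -evE.
  rewrite /dga_d ffunE DwE /= (eqP hv) big_ord_recr /=.
  rewrite [X in _ = _ + X](_ : _ = 0); last first.
    have : size (drop n v) = 1%N by rewrite size_drop (eqP hv) subSnn.
    by case: (drop n v) => [|? []] //= _; rewrite mulr0.
  rewrite addr0 exchange_big /=; apply: eq_bigr => j _.
  rewrite -(outer_sum j (ev a) (eqP hv)); apply: eq_bigr => u _.
  under eq_bigr => s _ do rewrite -(evE a u) -(evE (dgen K (tnth u j)) s).
  have := inner_sum ((-1)^+j * ev a (val u)) (tnth u j)
     (fun x => ((v == take j (val u) ++ x ++ drop j.+1 (val u))%B)%:R).
  by rewrite /= => ->.
- rewrite ev_out // (Dw_supp (m:=n)) // => s hs; exact: ev_out.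
Qed.

Lemma eqL12 : (L1 == L2) = false. Proof. by []. Qed.
Lemma eqL13 : (L1 == L3) = false. Proof. by []. Qed.
Lemma eqL21 : (L2 == L1) = false. Proof. by []. Qed.
Lemma eqL23 : (L2 == L3) = false. Proof. by []. Qed.
Lemma eqL31 : (L3 == L1) = false. Proof. by []. Qed.
Lemma eqL32 : (L3 == L2) = false. Proof. by []. Qed.
Definition eqLs := (eqL12, eqL13, eqL21, eqL23, eqL31, eqL32, eqxx).

Lemma natbT : (nat_of_bool true)%:R = 1 :> K. Proof. by []. Qed.
Lemma natbF : (nat_of_bool false)%:R = 0 :> K. Proof. by []. Qed.
Ltac simpL := do 3 (rewrite ?eqLs ?andbT ?andbF ?andTb ?andFb ?natbT ?natbF ?mul0r ?mul1r ?mulr0 ?mulr1 ?add0r ?addr0 ?oppr0 ?subr0 ?opprK).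

Lemma Dw_ext w (f g : F) : f =1 g -> Dw w f = Dw w g.
Proof.
elim: w f g => [|l1 t IH] f g e //.
case: t IH => [|l2 w'] IH //.
rewrite !Dw_cons2 /hd !e (IH (shl l1 f) (shl l1 g)) // => u; exact: e.
Qed.

Lemma Dw_lin w (f g : F) (c : K) : Dw w (fun u => c * f u + g u) = c * Dw w f + Dw w g.
Proof.
elim: w f g => [|l1 t IH] f g; first by rewrite /= mulr0 addr0.
case: t IH => [|l2 w'] IH; first by rewrite /= mulr0 addr0.
rewrite !Dw_cons2.
rewrite (Dw_ext _ (g := fun u => c * shl l1 f u + shl l1 g u)) // IH /hd; ring.
Qed.

Lemma Dw0 w : Dw w (fun _ => 0) = 0.
Proof.
elim: w => [|l1 t IH] //; case: t IH => [|l2 w'] IH //.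
by rewrite Dw_cons2 /hd (Dw_ext _ (g := fun _ => 0)) // IH !mulr0 !addr0 subr0.
Qed.

Lemma Dw_scale w (f : F) c : Dw w (fun u => c * f u) = c * Dw w f.
Proof.
rewrite (Dw_ext _ (g := fun u => c * f u + (fun _ => 0) u)); last by move=> u; rewrite addr0.
by rewrite Dw_lin Dw0 addr0.
Qed.

Lemma Dw_sub w (f g : F) : Dw w (fun u => f u - g u) = Dw w f - Dw w g.
Proof.
rewrite (Dw_ext _ (g := fun u => (-1) * g u + f u)); last by move=> u; ring.
by rewrite Dw_lin; ring.
Qed.

Lemma Dw_add w (f g : F) : Dw w (fun u => f u + g u) = Dw w f + Dw w g.
Proof.
rewrite (Dw_ext _ (g := fun u => 1 * f u + g u)); last by move=> u; ring.
by rewrite Dw_lin mul1r.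
Qed.

Lemma Dw_zero w (f : F) : f =1 (fun _ => 0) -> Dw w f = 0.
Proof. by move=> e; rewrite (Dw_ext _ e) Dw0. Qed.

Lemma Dw31 v f : Dw (L3 :: L1 :: v) f = Dw v (shl L1 (shl L3 f)).
Proof.
rewrite Dw_cons2 /hd; simpL.
case: v => [|x v]; first by rewrite /=; simpL.
by rewrite Dw_cons2 /hd; simpL.
Qed.

Lemma DD w f : Dw w (fun u => Dw u f) = 0.
Proof.
elim: w f => [|l1 t IH] f //; case: t IH => [|l2 w'] IH //.
pose g (u : seq 'I_3) := match u with x :: u' => hd f l1 x u' | [::] => 0 end.
rewrite Dw_cons2 (Dw_ext _ (g := fun u => g u - Dw u (shl l1 f))); last first.
  by case => [|x u] //=; rewrite subr0.
rewrite Dw_sub IH subr0.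
case: w' IH => [|x w''] IH.
  by rewrite /hd /= !mulr0 addr0 subr0.
rewrite Dw_cons2 (Dw_ext _ (g := fun u => ((l1 == L3) && (l2 == L3))%:R * shl L1 f u +
   ((l1 == L2) && (l2 == L2))%:R * shl L2 f u)); last by [].
rewrite Dw_add !Dw_scale /hd !Dw_cons2 /g /hd.
have [->|[->|->]] := I3_cases l1; have [->|[->|->]] := I3_cases l2;
  rewrite !eqLs /=; ring.
Qed.

Definition start2 (w : seq 'I_3) := if w is x :: _ then x == L2 else false.
Fixpoint run2 (w : seq 'I_3) : nat :=
  if w is l :: w' then (if l == L2 then (run2 w').+1 else 0%N) else 0%N.

Definition H (f : F) (w : seq 'I_3) : K :=
  match w with
  | l :: u =>
    if l == L1 then f (L3 :: L3 :: u)
    else if l == L2 then (odd (run2 w))%:R * f (L2 :: w)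
    else if start2 u then - ((odd (run2 u))%:R * f (L3 :: L2 :: u))
    else 0
  | [::] => 0
  end.

Lemma H1 f s : H f (L1 :: s) = f (L3 :: L3 :: s). Proof. by []. Qed.
Lemma H2 f s : H f (L2 :: s) = (odd (run2 (L2 :: s)))%:R * f (L2 :: L2 :: s). Proof. by []. Qed.
Lemma H32 f s : H f (L3 :: L2 :: s) = - H (shl L3 f) (L2 :: s). Proof. by []. Qed.
Lemma H3n f s : ~~ start2 s -> H f (L3 :: s) = 0.
Proof. by rewrite /H /= => /negbTE ->. Qed.

Lemma run2_nseq m t : ~~ start2 t -> run2 (nseq m L2 ++ t) = m.
Proof.
move=> ht; elim: m => [|m IH] /=; last by rewrite IH.
by case: t ht => [|x t] //= /negbTE ->.
Qed.

Lemma run2_dec u : u = nseq (run2 u) L2 ++ drop (run2 u) u /\ ~~ start2 (drop (run2 u) u).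
Proof.
elim: u => [|l u [IH1 IH2]] //=.
case: ifP => hl /=.
- by rewrite -IH1 (eqP hl).
- by rewrite hl.
Qed.

Lemma H_nseq f k t : (0 < k)%N -> ~~ start2 t ->
  H f (nseq k L2 ++ t) = (odd k)%:R * f (nseq k.+1 L2 ++ t).
Proof.
case: k => [|k] // _ ht.
by rewrite /= run2_nseq.
Qed.

Lemma D2 t f m : ~~ start2 t ->
  Dw (nseq m L2 ++ t) f = ((~~ odd m) && (0 < m)%N)%:R * f (nseq m.-1 L2 ++ t)
     + (-1)^+m * Dw t (fun u => f (nseq m L2 ++ u)).
Proof.
move=> ht; elim: m f => [|m IH] f; first by rewrite /= mul0r add0r mul1r.
rewrite [nseq m.+1 L2 ++ t]/=.
case e : (nseq m L2 ++ t) => [|x rest].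
  move: e; case: m IH => [|m] //= IH e; subst t.
  by rewrite mul0r add0r /= mulr0.
rewrite Dw_cons2 -e IH /hd; simpL.
have hx : (x == L2) = (0 < m)%N.
  case: m {IH} e => [|m] e.
    by move: ht; rewrite /= in e; rewrite e /= => /negbTE.
  by case: e => <- _; rewrite eqxx.
rewrite hx exprS.
case: m {IH hx} e => [|m] e /=.
  by rewrite !mul0r !add0r expr0 mul1r mulr1 mulN1r.
case: e => _ <-; rewrite /shl /=.
by case: (odd m) => /=; simpL; ring.
Qed.

Lemma Dloc t (g g' : F) : ~~ start2 t -> (forall u, ~~ start2 u -> g u = g' u) ->
  Dw t g = Dw t g'.
Proof.
case: t => [|l1 [|l2 w]] // ht e; rewrite /= in ht.
rewrite !Dw_cons2 /hd (negbTE ht) !andFb !mul0r !e //.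
congr (_ - _); apply: Dw_ext => u; rewrite /shl e //=.
Qed.

Lemma D2loc t (g g' : F) : (forall u, g (L2 :: u) = g' (L2 :: u)) ->
  Dw (L2 :: t) g = Dw (L2 :: t) g'.
Proof.
case: t => [|x w] // e.
rewrite !Dw_cons2 /hd !e; simpL.
congr (_ - _); apply: Dw_ext => u; exact: e.
Qed.

Lemma homot2 f u : start2 u -> Dw u (H f) + H (fun v => Dw v f) u = f u.
Proof.
move=> hu; have [e ht] := run2_dec u.
set m := run2 u in e ht; set t := drop m u in e ht.
have hm : (0 < m)%N by move: hu; rewrite e; case: (m) => [|?] //=; rewrite (negbTE ht).
rewrite e (D2 _ _ ht) (H_nseq _ hm ht) (D2 _ _ ht).
rewrite (Dloc (g' := fun v => (odd m)%:R * f (nseq m.+1 L2 ++ v))) //; last first.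
  by move=> v hv; rewrite H_nseq.
rewrite Dw_scale.
case: (m) hm => [|k] // _.
case: k => [|k].
  by rewrite /= !expr1 !exprS; simpL; ring.
rewrite [k.+2.-1]/= [k.+3.-1]/= (H_nseq _ _ ht) //.
rewrite !exprS /=.
by case: (odd k) => /=; simpL; ring.
Qed.

Lemma homotM f : f [::] = 0 -> f [:: L3] = 0 -> (forall s, f (L3 :: L1 :: s) = 0) ->
  forall w, Dw w (H f) + H (fun v => Dw v f) w = f w.
Proof.
move=> f0 f3 f31 w.
case: w => [|l s]; first by rewrite /= addr0.
have [el|[el|el]] := I3_cases l; subst l.
-
  rewrite H1 Dw_cons2 /hd; simpL.
  case: s => [|x s'].
    by rewrite /= add0r; simpL.
  rewrite Dw_cons2 (Dw_ext _ (g := shl L3 (shl L3 f))) // Dw_cons2 /hd; simpL.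
  rewrite /shl f31; simpL.
  have [->|[->|->]] := I3_cases x; simpL; ring.
- exact: homot2.
- case: s => [|x s']; first by rewrite /= add0r.
  have [ex|[ex|ex]] := I3_cases x; subst x.
  + rewrite Dw31 f31 /= Dw_zero ?add0r //.
  + rewrite Dw_cons2 /hd; simpL.
    rewrite (@D2loc _ _ (fun v => - H (shl L3 f) v)) //.
    rewrite (Dw_ext _ (g := fun v => (-1) * H (shl L3 f) v)); last by move=> v; ring.
    rewrite Dw_scale H32.
    have eH : H (shl L3 (fun v => Dw v f)) (L2 :: s') =
              - H (fun v => Dw v (shl L3 f)) (L2 :: s').
      by rewrite !H2 /shl (Dw_cons2 L3 L2 (L2 :: s') f) /hd; simpL; ring.
    rewrite eH; transitivity (shl L3 f (L2 :: s')); last by [].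
    rewrite -(@homot2 (shl L3 f) (L2 :: s') (eqxx _)); ring.
  + rewrite H3n // Dw_cons2 /hd; simpL.
    rewrite (Dloc (g' := fun _ => 0)) ?Dw0 ?subr0 ?addr0 //.
    by move=> u hu; rewrite /shl H3n.
Qed.

Lemma H_supp f (m : nat) : supp f m.+1 -> supp (H f) m.
Proof.
move=> hf [|l u] hs //=.
have hs' : forall v, size v = (size u).+2 -> f v = 0.
  by move=> v hv; apply: hf; rewrite hv eqSS.
case: ifP => _; first by rewrite hs'.
case: ifP => _; first by rewrite hs' ?mulr0.
case: ifP => _ //; by rewrite hs' ?mulr0 ?oppr0.
Qed.

Lemma evAdd n (a b : cochain K n) w : ev (a + b) w = ev a w + ev b w.
Proof. by rewrite /ev; case: insub => [t|]; rewrite ?ffunE ?addr0. Qed.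
Lemma evSub n (a b : cochain K n) w : ev (a - b) w = ev a w - ev b w.
Proof. by rewrite /ev; case: insub => [t|]; rewrite ?ffunE ?subr0. Qed.
Lemma evScale n (a : cochain K n) c w : ev (c *: a) w = c * ev a w.
Proof. by rewrite /ev; case: insub => [t|]; rewrite ?ffunE ?mulr0. Qed.

Lemma ev_mul2 i j s : ev (dga_mul (dga_gen K i) (dga_gen K j)) s = ((s == [:: i; j])%B)%:R.
Proof.
rewrite evM !evgen; case: s => [|l s] /=; first by rewrite mul0r.
by rewrite drop0 !eqseq_cons take0 eqxx andbT -natrM mulnb.
Qed.

Definition zzc (w : seq 'I_3) : K := ((w == [:: L1; L3])%B)%:R + ((w == [:: L3; L1])%B)%:R.

Lemma zzE w : ev (zz K) w = zzc w.
Proof. by rewrite /zz evAdd !ev_mul2. Qed.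

Definition Zf k := ev (zpow K k).
Definition Xf k := ev (dga_mul (x3 K) (zpow K k)).

Lemma Zf0 w : Zf 0 w = ((w == [::])%B)%:R.
Proof.
case: w => [|l w].
- have := evE (zpow K 0) (@Tuple 0 'I_3 [::] isT).
  by rewrite /Zf /= => ->; rewrite ffunE.
- by rewrite /Zf ev_out.
Qed.

Lemma ZfS k w : Zf k.+1 w = zzc (take 2%N w) * Zf k (drop 2%N w).
Proof. by rewrite /Zf -zzE; exact: (evM (zz K) (zpow K k) w). Qed.

Lemma XfE k w : Xf k w = ((take 1%N w == [:: L3])%B)%:R * Zf k (drop 1%N w).
Proof. by rewrite /Xf evM evgen. Qed.

Lemma Z_supp k : supp (Zf k) k.*2.
Proof. move=> s hs; exact: ev_out. Qed.
Lemma X_supp k : supp (Xf k) k.*2.+1.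
Proof. move=> s hs; exact: ev_out. Qed.

Lemma Z31 k v : Zf k.+1 (L3 :: L1 :: v) = Zf k v.
Proof. by rewrite ZfS /= /zzc !eqseq_cons take0 drop0; simpL. Qed.

Lemma X31 k v : Xf k.+1 (L3 :: L1 :: v) = Xf k v.
Proof.
rewrite !XfE /= ?take0 ?drop0 ZfS; simpL.
case: v => [|x v] /=; first by rewrite /zzc; simpL.
rewrite /zzc !eqseq_cons ?take0 ?drop0 eqxx; simpL.
by have [->|[->|->]] := I3_cases x; simpL.
Qed.

Lemma DP (G : F) : (forall w, Dw w G = 0) ->
  forall w, Dw w (fun u => zzc (take 2%N u) * G (drop 2%N u)) = 0.
Proof.
move=> hG [|l1 [|l2 w']] //.
rewrite Dw_cons2.
case: w' => [|x w''].
  by rewrite /hd /zzc /=; simpL.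
rewrite (Dw_cons2 l2 x w'').
rewrite (Dw_ext (x :: w'') (g := fun u => zzc [:: l1; l2] * G u)); last first.
  by move=> u; rewrite /shl /= take0 drop0.
rewrite Dw_scale hG.
rewrite /hd /zzc /shl /= ?take0 ?drop0 !eqseq_cons.
have [->|[->|->]] := I3_cases l1; have [->|[->|->]] := I3_cases l2;
  have [->|[->|->]] := I3_cases x; rewrite /= ?take0 ?drop0 ?eqseq_cons; simpL; try ring.

Qed.

Lemma DQ (G : F) : (forall w, Dw w G = 0) ->
  forall w, Dw w (fun u => ((take 1%N u == [:: L3])%B)%:R * G (drop 1%N u)) = 0.
Proof.
move=> hG [|l1 [|l2 w']] //.
rewrite Dw_cons2.
rewrite (Dw_ext _ (g := fun u => ((l1 == L3)%B)%:R * G u)); last first.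
  by move=> u; rewrite /shl /= ?take0 ?drop0 eqseq_cons eqxx andbT.
by rewrite Dw_scale hG /hd /=; simpL.
Qed.

Lemma DZ k w : Dw w (Zf k) = 0.
Proof.
elim: k w => [|k IH] w.
- case: w => [|l1 [|l2 w']] //.
  rewrite (Dw_supp (m := 0)) // => s hs; rewrite Zf0; case: s hs => //.
- by rewrite (Dw_ext _ (ZfS k)) DP.
Qed.

Lemma DX k w : Dw w (Xf k) = 0.
Proof. by rewrite (Dw_ext _ (XfE k)) DQ // => u; exact: DZ. Qed.

Definition cob (c : F) (n : nat) :=
  exists t : F, (forall w, (size w).+1 != n -> t w = 0) /\ forall w, c w = Dw w t.

Definition p31 (t : F) : F := fun w =>
  match w with l1 :: l2 :: v => ((l1 == L3) && (l2 == L1))%:R * t v | _ => 0 end.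

Lemma H0 f w : (forall v, f v = 0) -> H f w = 0.
Proof.
move=> h; case: w => [|l u] //=; rewrite !h.
by do ! case: ifP => _; simpL.
Qed.

Lemma step (n : nat) (c R R' : F) (lam : K) :
  supp c n.+2 -> (forall w, Dw w c = 0) -> supp R' n.+2 -> (forall w, Dw w R' = 0) ->
  (forall v, R' (L3 :: L1 :: v) = R v) ->
  cob (fun v => c (L3 :: L1 :: v) - lam * R v) n ->
  cob (fun w => c w - lam * R' w) n.+2.
Proof.
move=> hc dc hR dR hRR [t [ht et]].
pose e := fun w => c w - lam * R' w - Dw w (p31 t).
have hp : supp (p31 t) n.+1.
  by move=> [|l1 [|l2 v]] //= hs; rewrite ht ?mulr0.
have he : supp e n.+2.
  move=> w hw; rewrite /e hc // hR // (Dw_supp hp) //; by simpL.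
have De : forall w, Dw w e = 0.
  move=> w; rewrite /e.
  rewrite (Dw_sub w (fun u => c u - lam * R' u) (fun u => Dw u (p31 t))).
  by rewrite Dw_sub Dw_scale dc dR DD; simpL.
have e0 : e [::] = 0 by rewrite /e /= hc // hR //; simpL.
have e3 : e [:: L3] = 0 by rewrite /e /= hc // hR //; simpL.
have e31 : forall s, e (L3 :: L1 :: s) = 0.
  move=> s; rewrite /e Dw31 (Dw_ext _ (g := t)); last first.
    by move=> u; rewrite /shl /p31; simpL.
  by rewrite hRR -[Dw s t](et s) subrr.
exists (fun w => p31 t w + H e w); split.
- by move=> w hw; rewrite hp ?(H_supp he) ?addr0.
- move=> w; rewrite (Dw_add w (p31 t) (H e)).
  have hm := homotM e0 e3 e31 w.
  rewrite (H0 _ De) addr0 in hm.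
  by rewrite hm /e; ring.
Qed.

Lemma exist_even k : forall c, supp c k.*2 -> (forall w, Dw w c = 0) ->
  exists lam, cob (fun w => c w - lam * Zf k w) k.*2.
Proof.
elim: k => [|k IH] c hc dc.
- exists (c [::]), (fun _ => 0); split => // w; rewrite Dw0 Zf0.
  case: w => [|l w]; first by rewrite eqxx mulr1 subrr.
  by rewrite hc //; simpL.
- have hc' : supp (fun v => c (L3 :: L1 :: v)) k.*2.
    by move=> v hv; apply: hc; rewrite doubleS /= eqSS.
  have dc' : forall w, Dw w (fun v => c (L3 :: L1 :: v)) = 0.
    by move=> w; rewrite (Dw_ext _ (g := shl L1 (shl L3 c))) // -Dw31 dc.
  have [lam hl] := IH _ hc' dc'.
  exists lam; rewrite doubleS; apply: step hl => //.
  + by move=> s hs; apply: Z_supp; rewrite doubleS.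
  + exact: DZ.
  + exact: Z31.
Qed.

Lemma exist_odd k : forall c, supp c k.*2.+1 -> (forall w, Dw w c = 0) ->
  exists lam, cob (fun w => c w - lam * Xf k w) k.*2.+1.
Proof.
elim: k => [|k IH] c hc dc.
- have c1 : c [:: L1] = 0.
    by have := dc [:: L3; L3]; rewrite Dw_cons2 /hd /=; simpL.
  have c2 : c [:: L2] = 0.
    by have := dc [:: L2; L2]; rewrite Dw_cons2 /hd /=; simpL.
  exists (c [:: L3]), (fun _ => 0); split => // w; rewrite Dw0 XfE.
  case: w => [|l [|x w]].
  + by rewrite hc //= mul0r; simpL.
  + rewrite /= Zf0 eqseq_cons; simpL.
    by have [->|[->|->]] := I3_cases l; simpL; rewrite ?c1 ?c2 ?subrr.
  + by rewrite hc //= Zf0 /=; simpL.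
- have hc' : supp (fun v => c (L3 :: L1 :: v)) k.*2.+1.
    by move=> v hv; apply: hc; rewrite doubleS /= eqSS.
  have dc' : forall w, Dw w (fun v => c (L3 :: L1 :: v)) = 0.
    by move=> w; rewrite (Dw_ext _ (g := shl L1 (shl L3 c))) // -Dw31 dc.
  have [lam hl] := IH _ hc' dc'.
  exists lam; rewrite doubleS; apply: step hl => //.
  + by move=> s hs; apply: X_supp; rewrite doubleS.
  + exact: DX.
  + exact: X31.
Qed.

Lemma cob_shift (f : F) n : cob f n.+2 -> cob (fun v => f (L3 :: L1 :: v)) n.
Proof.
move=> [t [ht et]]; exists (shl L1 (shl L3 t)); split.
- by move=> w hw; rewrite /shl ht.
- by move=> w; rewrite et Dw31.
Qed.

Lemma notcobZ k : ~ cob (Zf k) k.*2.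
Proof.
elim: k => [|k IH].
- move=> [t [_ et]]; have := et [::]; rewrite Zf0 eqxx /= => /eqP.
  by rewrite oner_eq0.
- rewrite doubleS => /cob_shift h; apply: IH.
  move: h => [t [ht et]]; exists t; split => // w; by rewrite -et Z31.
Qed.

Lemma notcobX k : ~ cob (Xf k) k.*2.+1.
Proof.
elim: k => [|k IH].
- move=> [t [_ et]]; have := et [:: L3]; rewrite XfE /= Zf0 eqxx /=; simpL.
  by move/eqP; rewrite oner_eq0.
- rewrite doubleS => /cob_shift h; apply: IH.
  move: h => [t [ht et]]; exists t; split => // w; by rewrite -et X31.
Qed.

Lemma cob_ext (f g : F) n : f =1 g -> cob f n -> cob g n.
Proof. by move=> e [t [ht et]]; exists t; split => // w; rewrite -e. Qed.

Lemma cob_lin (f g : F) a n : cob f n -> cob g n -> cob (fun w => a * f w + g w) n.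
Proof.
move=> [t [ht et]] [t' [ht' et']]; exists (fun w => a * t w + t' w); split.
- by move=> w hw; rewrite ht // ht' // mulr0 addr0.
- by move=> w; rewrite Dw_lin et et'.
Qed.

Lemma uniq_cob (c R : F) n lam mu : ~ cob R n ->
  cob (fun w => c w - lam * R w) n -> cob (fun w => c w - mu * R w) n -> mu = lam.
Proof.
move=> nR h1 h2; apply/eqP; apply/negPn/negP => hne.
have c0 : cob (fun _ => 0) n by exists (fun _ => 0); split => // w; rewrite Dw0.
apply: nR; have h := cob_lin ((mu - lam)^-1) (cob_lin (-1) h2 h1) c0.
apply: cob_ext h => w.
have hne' : mu - lam != 0 by rewrite subr_eq0.
rewrite /=; field; exact: hne'.
Qed.

Lemma ev0 n w : ev (0 : cochain K n) w = 0.
Proof. by rewrite /ev; case: insub => // t; rewrite ffunE. Qed.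

Lemma cobE n (c : cochain K n) : is_coboundary c <-> cob (ev c) n.
Proof.
case: n c => [|n] c /=.
- split => [->|[t [ht et]]].
  + by exists (fun _ => 0); split => // w; rewrite ev0 Dw0.
  + apply: ev_inj => w; rewrite et ev0 Dw_zero // => u; exact: ht.
- split => [[b hb]|[t [ht et]]].
  + exists (ev b); split => [w hw|w]; first by apply: ev_out.
    by rewrite -hb evD.
  + exists [ffun u : word n => t (val u)]; apply: ev_inj => w.
    rewrite evD et; apply: Dw_ext => u.
    case: (boolP (size u == n)) => hu.
    * by rewrite -[u]/(val (Tuple hu)) evE ffunE.
    * by rewrite ev_out // ht.
Qed.

Lemma cocycle n (c : cochain K n) : dga_d c = 0 -> forall w, Dw w (ev c) = 0.
Proof. by move=> h w; rewrite -evD h ev0. Qed.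

Lemma d_zero n (c : cochain K n) : (forall w, Dw w (ev c) = 0) -> dga_d c = 0.
Proof. by move=> h; apply: ev_inj => w; rewrite evD h ev0. Qed.

Lemma main_even k (c : cochain K k.*2) : dga_d c = 0 ->
  exists! lambda : K, is_coboundary (c - lambda *: zpow K k).
Proof.
move=> dc.
have hc : supp (ev c) k.*2 by move=> s hs; exact: ev_out.
have [lam hl] := exist_even hc (cocycle dc).
have eq1 : forall mu, is_coboundary (c - mu *: zpow K k) <->
                      cob (fun w => ev c w - mu * Zf k w) k.*2.
  move=> mu; rewrite cobE; split; apply: cob_ext => w;
    by rewrite evSub evScale.
exists lam; split; first by apply/eq1.
move=> mu /eq1 hmu; symmetry; exact: (uniq_cob (@notcobZ k) hl hmu).
Qed.

Lemma main_odd k (c : cochain K k.*2.+1) : dga_d c = 0 ->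
  exists! lambda : K, is_coboundary (c - lambda *: dga_mul (x3 K) (zpow K k)).
Proof.
move=> dc.
have hc : supp (ev c) k.*2.+1 by move=> s hs; exact: ev_out.
have [lam hl] := exist_odd hc (cocycle dc).
have eq1 : forall mu, is_coboundary (c - mu *: dga_mul (x3 K) (zpow K k)) <->
                      cob (fun w => ev c w - mu * Xf k w) k.*2.+1.
  move=> mu; rewrite cobE; split; apply: cob_ext => w;
    by rewrite evSub evScale.
exists lam; split; first by apply/eq1.
move=> mu /eq1 hmu; symmetry; exact: (uniq_cob (@notcobX k) hl hmu).
Qed.

Lemma dx3 : dga_d (x3 K) = 0.
Proof.
apply: d_zero => w.
case: (boolP (size w == 2%N)) => hw.
- have [l1 [l2 ->]] : exists l1 l2, w = [:: l1; l2].
    by case: w hw => [|l1 [|l2 [|x y]]] //; exists l1, l2.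
  by rewrite (Dw_cons2 l1 l2 [::]) /hd !evgen /=; simpL.
- rewrite (Dw_supp (m := 1%N)) // => s hs; exact: ev_out.
Qed.

Lemma zz_Z1 w : ev (zz K) w = Zf 1 w.
Proof.
rewrite zzE ZfS Zf0.
case: w => [|a [|b [|c w]]] /=; simpL => //.
by rewrite /zzc !eqseq_cons /=; simpL.
Qed.

Lemma dzz : dga_d (zz K) = 0.
Proof. by apply: d_zero => w; rewrite (Dw_ext _ zz_Z1) DZ. Qed.

Lemma cob33 : is_coboundary (dga_mul (x3 K) (x3 K)).
Proof.
apply/cobE; exists (ev (x1 K)); split => [w hw|w]; first by apply: ev_out.
rewrite ev_mul2.
case: w => [|l1 [|l2 [|x w]]] //.
- by rewrite /= eqseq_cons /= andbF.
- by rewrite (Dw_cons2 l1 l2 [::]) /hd !evgen /=; have [->|[->|->]] := I3_cases l1;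
    have [->|[->|->]] := I3_cases l2; simpL.
- rewrite (Dw_supp (m := 1%N)) //; last by move=> s hs; exact: ev_out.
  by rewrite !eqseq_cons /=; simpL.
Qed.

Lemma cobcomm : is_coboundary (dga_mul (x3 K) (zz K) - dga_mul (zz K) (x3 K)).
Proof.
apply/cobE; exists (ev (dga_mul (x1 K) (x1 K))); split => [w hw|w]; first by apply: ev_out.
case: (boolP (size w == 3%N)) => hw.
- have [a [b [c ->]]] : exists a b c, w = [:: a; b; c].
    by case: w hw => [|a [|b [|c [|x y]]]] //; exists a, b, c.
  rewrite evSub (evM (x3 K) (zz K)) (evM (zz K) (x3 K)) !zzE !evgen /= /hd /shl !ev_mul2 /zzc /=.
  by have [->|[->|->]] := I3_cases a; have [->|[->|->]] := I3_cases b; have [->|[->|->]] := I3_cases c; rewrite /= ?eqseq_cons /=; simpL; rewrite ?subrr.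
- rewrite (@ev_out (1+2)%N _ w hw) (Dw_supp (m := 2%N)) // => s hs; exact: ev_out.
Qed.
End Work.

Unset Implicit Arguments.
Set Strict Implicit.

Theorem proposition2p1 (K : closedFieldType) (char0 : [pchar K] =i pred0) :
  dga_d (x3 K) = 0 /\ dga_d (zz K) = 0 /\
  is_coboundary (dga_mul (x3 K) (x3 K)) /\
  is_coboundary (dga_mul (x3 K) (zz K) - dga_mul (zz K) (x3 K)) /\
  (forall k : nat, dga_d (zpow K k) = 0 /\ dga_d (dga_mul (x3 K) (zpow K k)) = 0) /\
  (forall (k : nat) (c : cochain K k.*2), dga_d c = 0 ->
     exists! lambda : K, is_coboundary (c - lambda *: zpow K k)) /\
  (forall (k : nat) (c : cochain K (k.*2).+1), dga_d c = 0 ->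
     exists! lambda : K, is_coboundary (c - lambda *: dga_mul (x3 K) (zpow K k))).
Proof.
split; first exact: dx3.
split; first exact: dzz.
split; first exact: cob33.
split; first exact: cobcomm.
split.
  move=> k; split; apply: d_zero => w; [exact: DZ | exact: DX].
split; [exact: main_even | exact: main_odd].
Qed.
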